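(* Let $\mathbb K$ be algebraically closed of characteristic $0$, $f(y)=\prod_{i=1}^{\gamma}(y-\alpha_i)^{\beta_i}$ with pairwise distinct $\alpha_i\in\mathbb K^*$ and $\beta_i\ge1$, and $U_f=\operatorname{Spec}\mathbb K[x_1,x_2,y^{\pm1}]/(x_1x_2-f(y))$. Then the closed irreducible curves in $U_f$ isomorphic to $\mathbb A^1$ are exactly the $2\gamma$ curves $\{x_2=0,\ y=\alpha_i\}$ and $\{x_1=0,\ y=\alpha_i\}$, $i=1,\dots,\gamma$. *)

(* Defs.v *)
From HB Require Import structures.
From mathcomp Require Import all_boot all_order all_algebra.
Set Implicit Arguments. Unset Strict Implicit. Unset Printing Implicit Defensive.
Import GRing.Theory.
Local Open Scope ring_scope.

Inductive in_subalg (K : fieldType) (gens : seq {poly K}) : {poly K} -> Prop :=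
  | sa_const (c : K) : in_subalg gens c%:P
  | sa_gen (p : {poly K}) : p \in gens -> in_subalg gens p
  | sa_add (p q : {poly K}) : in_subalg gens p -> in_subalg gens q -> in_subalg gens (p + q)
  | sa_mul (p q : {poly K}) : in_subalg gens p -> in_subalg gens q -> in_subalg gens (p * q).

(* U_f = Spec K[x1,x2,y,y^-1]/(x1 x2 - f(y)); its coordinate ring is
   K[x1,x2,y,z]/(x1 x2 - f(y), y z - 1).  A morphism A^1 -> U_f is given by
   (p1,p2,q,r) in K[t]^4 with p1 p2 = f(q), q r = 1, i.e. the K-algebra map
   x1 |-> p1, x2 |-> p2, y |-> q, y^-1 |-> r.  It is a closed embedding iff
   this map of coordinate rings is surjective, i.e. t lies in K[p1,p2,q,r]. *)
Definition closed_embedding_A1 (K : fieldType) (f : {poly K})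
    (p1 p2 q r : {poly K}) : Prop :=
  [/\ q * r = 1, p1 * p2 = f \Po q & in_subalg [:: p1; p2; q; r] 'X].

Definition image_curve (K : fieldType) (p1 p2 q : {poly K}) (pt : K * K * K) : Prop :=
  exists t : K, pt = (p1.[t], p2.[t], q.[t]).

Definition curve_x2_zero (K : fieldType) (a : K) (pt : K * K * K) : Prop :=
  pt.1.2 = 0 /\ pt.2 = a.
Definition curve_x1_zero (K : fieldType) (a : K) (pt : K * K * K) : Prop :=
  pt.1.1 = 0 /\ pt.2 = a.

Definition same_set (T : Type) (A B : T -> Prop) : Prop := forall x, A x <-> B x.

(* Main.v *)
Require Import Defs.
From HB Require Import structures.
From mathcomp Require Import all_boot all_order all_algebra.
Import GRing.Theory.
Local Open Scope ring_scope.

Lemma const_subalg (K : fieldType) (gens : seq {poly K}) (p : {poly K}) :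
  all (fun g : {poly K} => (size g <= 1)%N) gens -> in_subalg gens p -> (size p <= 1)%N.
Proof.
move=> hall; elim=> {p}.
- by move=> c; rewrite size_polyC leq_b1.
- by move=> p hp; move/allP: hall => /(_ p hp).
- move=> p q _ hp _ hq; apply: leq_trans (size_polyD p q) _.
  by rewrite geq_max hp hq.
- move=> p q _ hp _ hq.
  rewrite (size1_polyC hp) (size1_polyC hq) -polyCM size_polyC leq_b1 //.
Qed.
Arguments const_subalg {K gens p}.

Lemma X_not_const (K : fieldType) (gens : seq {poly K}) :
  all (fun g : {poly K} => (size g <= 1)%N) gens -> ~ in_subalg gens 'X.
Proof. by move=> hall /(const_subalg hall); rewrite size_polyX. Qed.
Arguments X_not_const {K gens}.

Lemma surj_poly (K : closedFieldType) (p : {poly K}) (x : K) :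
  (1 < size p)%N -> exists t, p.[t] = x.
Proof.
move=> hp.
have : size (p - x%:P) != 1%N.
  apply/negP => /eqP h.
  have : (size p <= 1)%N.
    have -> : p = (p - x%:P) + x%:P by rewrite subrK.
    apply: leq_trans (size_polyD _ _) _.
    by rewrite geq_max h /= size_polyC leq_b1.
  by rewrite leqNgt hp.
move/closed_rootP => [t /rootP]; rewrite hornerD hornerN hornerC => /eqP.
by rewrite subr_eq0 => /eqP <-; exists t.
Qed.

Arguments surj_poly {K p}.

Theorem lemma5p4 (K : closedFieldType) (hchar : [pchar K] =i pred0)
  (gamma : nat) (alpha : 'I_gamma -> K) (beta : 'I_gamma -> nat)
  (halpha_inj : injective alpha) (halpha_nz : forall i, alpha i != 0)
  (hbeta : forall i, (0 < beta i)%N) :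
  let f := \prod_(i < gamma) ('X - (alpha i)%:P) ^+ (beta i) in
  (* every closed curve in U_f isomorphic to A^1 is one of the 2*gamma lines *)
  (forall p1 p2 q r : {poly K}, closed_embedding_A1 f p1 p2 q r ->
     exists i : 'I_gamma,
       same_set (image_curve p1 p2 q) (curve_x2_zero (alpha i)) \/
       same_set (image_curve p1 p2 q) (curve_x1_zero (alpha i)))
  /\
  (* and each of these lines is such a curve *)
  (forall i : 'I_gamma,
     (exists p1 p2 q r : {poly K}, closed_embedding_A1 f p1 p2 q r /\
        same_set (image_curve p1 p2 q) (curve_x2_zero (alpha i))) /\
     (exists p1 p2 q r : {poly K}, closed_embedding_A1 f p1 p2 q r /\
        same_set (image_curve p1 p2 q) (curve_x1_zero (alpha i)))).
Proof.
move=> f.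
have froot : forall i, f.[alpha i] = 0.
  move=> i; rewrite /f horner_prod; apply/eqP/prodf_eq0; exists i => //.
  by rewrite horner_exp hornerXsubC subrr expf_eq0 hbeta eqxx.
split.
- move=> p1 p2 q r [hqr hf hX].
  have qu : q \is a GRing.unit.
    by apply/unitrP; exists r; split; first [exact hqr | rewrite mulrC].
  have ru : r \is a GRing.unit by apply/unitrP; exists q; split; first [exact hqr | rewrite mulrC].
  move: qu ru; rewrite !poly_unitE => /andP[/eqP sq _] /andP[/eqP sr _].
  have sq' : (size q <= 1)%N by rewrite sq.
  have sr' : (size r <= 1)%N by rewrite sr.
  set c := q`_0 in sq'.
  have qc : q = c%:P by apply: size1_polyC.
  rewrite qc comp_polyCr in hf.
  have [fc0|fcn0] := eqVneq f.[c] 0; last first.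
    exfalso; apply: (X_not_const _ hX).
    have : p1 * p2 \is a GRing.unit by rewrite hf poly_unitE size_polyC fcn0 coefC eqxx /= unitfE.
    rewrite unitrM !poly_unitE => /andP[/andP[/eqP s1 _] /andP[/eqP s2 _]].
    by rewrite /= s1 s2 sq sr.
  move: (fc0); rewrite /f horner_prod => /eqP /prodf_eq0 [i _].
  rewrite horner_exp hornerXsubC expf_eq0 subr_eq0 => /andP[_ /eqP ci].
  exists i.
  have hp0 : p1 * p2 = 0 by rewrite hf fc0.
  move/eqP: hp0; rewrite mulf_eq0 => /orP[/eqP h1|/eqP h2].
  + right.
    have s2 : (1 < size p2)%N.
      rewrite ltnNge; apply/negP => s2; apply: (X_not_const _ hX).
      by rewrite /= h1 size_poly0 s2 sq' sr'.
    move=> [[x1 x2] y]; split.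
    * by move=> [t [-> -> ->]]; rewrite /curve_x1_zero /= h1 qc horner0 hornerC ci.
    * rewrite /curve_x1_zero /= => [[-> ->]].
      have [t ht] := surj_poly x2 s2.
      by exists t; rewrite h1 horner0 ht qc hornerC ci.
  + left.
    have s1 : (1 < size p1)%N.
      rewrite ltnNge; apply/negP => s1; apply: (X_not_const _ hX).
      by rewrite /= h2 size_poly0 s1 sq' sr'.
    move=> [[x1 x2] y]; split.
    * by move=> [t [-> -> ->]]; rewrite /curve_x2_zero /= h2 qc horner0 hornerC ci.
    * rewrite /curve_x2_zero /= => [[-> ->]].
      have [t ht] := surj_poly x1 s1.
      by exists t; rewrite h2 horner0 ht qc hornerC ci.
- move=> i.
  have emb1 : closed_embedding_A1 f 'X 0 (alpha i)%:P (alpha i)^-1%:P.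
    split.
    + by rewrite -polyCM mulfV.
    + by rewrite mulr0 comp_polyCr froot.
    + by apply: sa_gen; rewrite inE eqxx.
  have emb2 : closed_embedding_A1 f 0 'X (alpha i)%:P (alpha i)^-1%:P.
    split.
    + by rewrite -polyCM mulfV.
    + by rewrite mul0r comp_polyCr froot.
    + by apply: sa_gen; rewrite !inE eqxx orbT.
  split.
  + exists 'X, 0, (alpha i)%:P, (alpha i)^-1%:P; split => // -[[x1 x2] y]; split.
    * by move=> [t [-> -> ->]]; rewrite /curve_x2_zero /= horner0 hornerC.
    * rewrite /curve_x2_zero /= => [[-> ->]].
      by exists x1; rewrite hornerX horner0 hornerC.
  + exists 0, 'X, (alpha i)%:P, (alpha i)^-1%:P; split => // -[[x1 x2] y]; split.
    * by move=> [t [-> -> ->]]; rewrite /curve_x1_zero /= horner0 hornerC.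
    * rewrite /curve_x1_zero /= => [[-> ->]].
      by exists x2; rewrite hornerX horner0 hornerC.
Qed.
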